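(* Consider two elementary triangles with the vertices $\mathfrak{z}_0$, $\mathfrak{z}_1=\mathfrak{z}_0+1$, $\mathfrak{z}_2=\mathfrak{z}_0+\omega$, and $\mathfrak{z}_3=\mathfrak{z}_0+1+\omega$. Suppose that \begin{itemize} \item[{\rm (i)}] $|u(\mathfrak{z}_1)-u(\mathfrak{z}_0)|=|u(\mathfrak{z}_2)-u(\mathfrak{z}_0)|$; \item[{\rm (ii)}] $\measuredangle v(\mathfrak{z}_1)v(\mathfrak{z}_0)v(\mathfrak{z}_2)=\vartheta\;\;$ and $\;\;\measuredangle u(\mathfrak{z}_1)u(\mathfrak{z}_0)u(\mathfrak{z}_2)=2\pi-2\vartheta\;\;$ for some $\vartheta$. \end{itemize} Then \begin{equation} |u(\mathfrak{z}_3)-u(\mathfrak{z}_0)|=|u(\mathfrak{z}_1)-u(\mathfrak{z}_0)|=|u(\mathfrak{z}_2)-u(\mathfrak{z}_0)|, \end{equation} and hence \begin{equation} |v(\mathfrak{z}_3)-v(\mathfrak{z}_1)|=|v(\mathfrak{z}_0)-v(\mathfrak{z}_1)|, \qquad |v(\mathfrak{z}_3)-v(\mathfrak{z}_2)|=|v(\mathfrak{z}_0)-v(\mathfrak{z}_2)| \end{equation} and \begin{equation} |w(\mathfrak{z}_3)-w(\mathfrak{z}_1)|=|w(\mathfrak{z}_3)-w(\mathfrak{z}_2)|=|w(\mathfrak{z}_3)-w(\mathfrak{z}_0)|. \end{equation}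
   Context: Here $\omega=e^{2\pi i/3}$, and $u,v,w$ are complex functions on the vertices $k+\ell\omega+m\omega^2$ of the regular triangular lattice forming a solution of the $fgh$--system: on every elementary triangle with consecutive vertices $\mathfrak{z}_a,\mathfrak{z}_b,\mathfrak{z}_c$ such that $\mathfrak{z}_b-\mathfrak{z}_a,\mathfrak{z}_c-\mathfrak{z}_b,\mathfrak{z}_a-\mathfrak{z}_c\in\{1,\omega,\omega^2\}$ one has $\frac{u(\mathfrak{z}_b)-u(\mathfrak{z}_a)}{u(\mathfrak{z}_c)-u(\mathfrak{z}_b)}=\frac{v(\mathfrak{z}_c)-v(\mathfrak{z}_b)}{v(\mathfrak{z}_a)-v(\mathfrak{z}_c)}$ (so that the triangles $u(\mathfrak{z}_a)u(\mathfrak{z}_b)u(\mathfrak{z}_c)$, $v(\mathfrak{z}_b)v(\mathfrak{z}_c)v(\mathfrak{z}_a)$, $w(\mathfrak{z}_c)w(\mathfrak{z}_a)w(\mathfrak{z}_b)$ are similar), and $w(\mathfrak{z}_2')-w(\mathfrak{z}_1')=1/\big((u(\mathfrak{z}_2')-u(\mathfrak{z}_1'))(v(\mathfrak{z}_2')-v(\mathfrak{z}_1'))\big)$ for every edge with $\mathfrak{z}_2'-\mathfrak{z}_1'\in\{1,\omega,\omega^2\}$. *)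

(* Defs.v *)
From Stdlib Require Import Reals ZArith.
From Coquelicot Require Import Coquelicot.
Open Scope R_scope.
Open Scope C_scope.

(* Since 1 + omega + omega^2 = 0, every vertex is uniquely a + b*omega with a b : Z;
   we represent it by the pair (a, b). *)
Definition vtx : Type := (Z * Z)%type.

(* the complex point of a vertex: a + b*omega, omega = e^{2 pi i/3} *)
Definition omega : C := ((-1/2)%R, (sqrt 3 / 2)%R).
Definition vpt (z : vtx) : C := RtoC (IZR (fst z)) + RtoC (IZR (snd z)) * omega.

Definition vsub (p q : vtx) : vtx := ((fst p - fst q)%Z, (snd p - snd q)%Z).

(* d is one of 1, omega, omega^2 (= -1 - omega) *)
Definition unit_step (d : vtx) : Prop :=
  d = (1%Z, 0%Z) \/ d = (0%Z, 1%Z) \/ d = ((-1)%Z, (-1)%Z).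

Definition vshift (z : vtx) (a b : Z) : vtx := ((fst z + a)%Z, (snd z + b)%Z).

(* The edge condition w(z2')-w(z1') = 1/((u(z2')-u(z1'))(v(z2')-v(z1')))
   presupposes that u and v differ at the two ends of every edge; we make this
   explicit (it also makes all ratios in the triangle condition well defined). *)
Definition fgh_system (u v w : vtx -> C) : Prop :=
  (forall z1 z2 : vtx, unit_step (vsub z2 z1) -> u z2 <> u z1 /\ v z2 <> v z1) /\
  (forall za zb zc : vtx,
      unit_step (vsub zb za) -> unit_step (vsub zc zb) -> unit_step (vsub za zc) ->
      (u zb - u za) / (u zc - u zb) = (v zc - v zb) / (v za - v zc)) /\
  (forall z1 z2 : vtx, unit_step (vsub z2 z1) ->
      w z2 - w z1 = / ((u z2 - u z1) * (v z2 - v z1))).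

(* Oriented angle: oangle A B C t  means  the angle  ∡ A B C  (at vertex B, rotating
   counterclockwise from the ray B->A to the ray B->C) equals t, measured in [0, 2 pi). *)
Definition oangle (A B Cc : C) (t : R) : Prop :=
  A <> B /\ Cc <> B /\ (0 <= t < 2 * PI)%R /\
  (Cc - B) / (A - B) = RtoC (Cmod ((Cc - B) / (A - B))) * (cos t, sin t).

(* Main.v *)
Require Import Defs.
From Stdlib Require Import Reals ZArith Lra.
From Coquelicot Require Import Coquelicot.
Open Scope R_scope.
Open Scope C_scope.

Lemma Cmod_sym (x y : C) : Cmod (x - y) = Cmod (y - x).
Proof. replace (x - y) with (- (y - x)) by ring. apply Cmod_opp. Qed.

Lemma Cneq0 (x y : C) : x <> y -> x - y <> 0.
Proof. intros H H'. apply H. replace x with ((x - y) + y) by ring. rewrite H'. ring. Qed.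

Lemma Cmod_pos (x : C) : x <> 0 -> (0 < Cmod x)%R.
Proof. intros H. destruct (Cmod_ge_0 x) as [h|h]; auto. exfalso; apply H, Cmod_eq_0; auto. Qed.

Lemma nz_step (th s : R) : (0 < th <= PI)%R -> (0 <= s)%R ->
  RtoC 1 - RtoC s * (cos th, sin th) <> 0.
Proof.
  intros Hth Hs H.
  assert (H1 := f_equal fst H). assert (H2 := f_equal snd H). simpl in H1, H2. ring_simplify in H1. ring_simplify in H2.
  destruct (Rle_lt_or_eq_dec th PI (proj2 Hth)) as [Hl|He].
  - assert (0 < sin th)%R by (apply sin_gt_0; lra). assert (s = 0)%R by nra. subst; lra.
  - subst. rewrite cos_PI in H1. lra.
Qed.

Lemma modsym_e (th s : R) :
  Cmod (RtoC 1 - RtoC s * (cos th, (- sin th)%R)) = Cmod (RtoC 1 - RtoC s * (cos th, sin th)).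
Proof. unfold Cmod. simpl. f_equal. ring. Qed.

Lemma core (u0 u1 u2 u3 v0 v1 v2 v3 : C) (th s : R) :
  u1 - u0 <> 0 -> v1 - v0 <> 0 -> (0 < th <= PI)%R -> (0 <= s)%R ->
  (u3-u0)*((v1-v0)-(v3-v0)) = (v1-v0)*(u1-u0) ->
  (u3-u0)*((v2-v0)-(v3-v0)) = (v2-v0)*(u2-u0) ->
  v2 - v0 = (v1-v0) * (RtoC s * (cos th, sin th)) ->
  u2 - u0 = (u1-u0) * ((cos th, (- sin th)%R)*(cos th, (- sin th)%R)) ->
  Cmod (u3 - u0) = Cmod (u1 - u0).
Proof.
  intros nu nv Hth Hs E1 E2 Hv Hu.
  set (e := (cos th, sin th)) in *.
  set (ec := (cos th, (- sin th)%R)) in *.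
  assert (Hee : e * ec = 1).
  { unfold e, ec; apply injective_projections; simpl.
    - rewrite <- (sin2_cos2 th). unfold Rsqr. ring.
    - ring. }
  assert (X : (v1-v0) * ((u3-u0)*(RtoC 1 - RtoC s * e) - (u1-u0)*(RtoC 1 - RtoC s * ec)) =
    ((u3-u0)*((v1-v0)-(v3-v0)) - (v1-v0)*(u1-u0)) - ((u3-u0)*((v2-v0)-(v3-v0)) - (v2-v0)*(u2-u0))
    + (v1-v0)*RtoC s*(u1-u0)*ec*(RtoC 1 - e*ec)).
  { rewrite Hv, Hu. ring. }
  rewrite E1, E2, Hee in X.
  assert (Y : (u3-u0)*(RtoC 1 - RtoC s * e) = (u1-u0)*(RtoC 1 - RtoC s * ec)).
  { assert (Z : (v1-v0) * ((u3-u0)*(RtoC 1 - RtoC s * e) - (u1-u0)*(RtoC 1 - RtoC s * ec)) = 0)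
      by (rewrite X; ring).
    assert (Z' : ((u3-u0)*(RtoC 1 - RtoC s * e) - (u1-u0)*(RtoC 1 - RtoC s * ec)) = 0).
    { rewrite <- (Cmult_0_r (/ (v1 - v0))), <- Z. field. auto. }
    clear Z; rename Z' into Z.
    replace ((u3-u0)*(RtoC 1 - RtoC s * e)) with
        (((u3-u0)*(RtoC 1 - RtoC s * e) - (u1-u0)*(RtoC 1 - RtoC s * ec)) + (u1-u0)*(RtoC 1 - RtoC s * ec)) by ring.
      rewrite Z. ring. }
  apply (f_equal Cmod) in Y. rewrite !Cmod_mult in Y. unfold ec, e in Y. rewrite modsym_e in Y.
  apply Rmult_eq_reg_r with (1 := Y).
  apply Rgt_not_eq, Cmod_pos, nz_step; auto.
Qed.

Lemma cs_sq (th : R) :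
  (cos (2 * PI - 2 * th), sin (2 * PI - 2 * th)) = (cos th, (- sin th)%R) * (cos th, (- sin th)%R).
Proof.
  apply injective_projections; simpl.
  - rewrite cos_minus, cos_2PI, sin_2PI, cos_2a. ring.
  - rewrite sin_minus, cos_2PI, sin_2PI, sin_2a. ring.
Qed.

Ltac us := unfold unit_step, vsub, vshift; simpl;
  first [left; f_equal; ring | right; left; f_equal; ring | right; right; f_equal; ring].

Lemma cancel_mod (p q r t : R) : (0 < p)%R -> (r * q = t * p)%R -> r = p -> q = t.
Proof. intros Hp H E. subst r. apply Rmult_eq_reg_l with p; lra. Qed.

Theorem lemma22 (u v w : vtx -> C) (z0 : vtx) :
  fgh_system u v w ->
  Cmod (u (vshift z0 1 0) - u z0) = Cmod (u (vshift z0 0 1) - u z0) ->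
  (exists th : R,
      oangle (v (vshift z0 1 0)) (v z0) (v (vshift z0 0 1)) th /\
      oangle (u (vshift z0 1 0)) (u z0) (u (vshift z0 0 1)) (2 * PI - 2 * th)%R) ->
  (Cmod (u (vshift z0 1 1) - u z0) = Cmod (u (vshift z0 1 0) - u z0) /\
   Cmod (u (vshift z0 1 0) - u z0) = Cmod (u (vshift z0 0 1) - u z0)) /\
  (Cmod (v (vshift z0 1 1) - v (vshift z0 1 0)) = Cmod (v z0 - v (vshift z0 1 0)) /\
   Cmod (v (vshift z0 1 1) - v (vshift z0 0 1)) = Cmod (v z0 - v (vshift z0 0 1))) /\
  (Cmod (w (vshift z0 1 1) - w (vshift z0 1 0)) = Cmod (w (vshift z0 1 1) - w (vshift z0 0 1)) /\
   Cmod (w (vshift z0 1 1) - w (vshift z0 0 1)) = Cmod (w (vshift z0 1 1) - w z0)).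
Proof.
  intros [Hne [Htri Hw]] HA [th [Hov Hou]].
  destruct (Hne z0 (vshift z0 1 0) ltac:(us)) as [nu10 nv10].
  destruct (Hne z0 (vshift z0 0 1) ltac:(us)) as [nu20 nv20].
  destruct (Hne (vshift z0 1 0) (vshift z0 1 1) ltac:(us)) as [nu31 nv31].
  destruct (Hne (vshift z0 0 1) (vshift z0 1 1) ltac:(us)) as [nu32 nv32].
  destruct (Hne (vshift z0 1 1) z0 ltac:(us)) as [nu03 nv03].
  pose proof (Htri (vshift z0 1 1) z0 (vshift z0 1 0) ltac:(us) ltac:(us) ltac:(us)) as T1.
  pose proof (Htri (vshift z0 1 1) z0 (vshift z0 0 1) ltac:(us) ltac:(us) ltac:(us)) as T2.
  pose proof (Hw (vshift z0 1 0) (vshift z0 1 1) ltac:(us)) as W1.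
  pose proof (Hw (vshift z0 0 1) (vshift z0 1 1) ltac:(us)) as W2.
  pose proof (Hw (vshift z0 1 1) z0 ltac:(us)) as W0.
  destruct Hov as [_ [_ [Hthv Hv]]].
  destruct Hou as [_ [_ [Hthu Hu]]].
  revert nu10 nv10 nu20 nv20 nu31 nv31 nu32 nv32 nu03 nv03 T1 T2 W1 W2 W0 Hv Hu HA.
  generalize (u z0) (u (vshift z0 1 0)) (u (vshift z0 0 1)) (u (vshift z0 1 1))
    (v z0) (v (vshift z0 1 0)) (v (vshift z0 0 1)) (v (vshift z0 1 1))
    (w z0) (w (vshift z0 1 0)) (w (vshift z0 0 1)) (w (vshift z0 1 1)).
  intros u0 u1 u2 u3 v0 v1 v2 v3 w0 w1 w2 w3.
  intros nu10 nv10 nu20 nv20 nu31 nv31 nu32 nv32 nu03 nv03 T1 T2 W1 W2 W0 Hv Hu HA.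
  apply Cneq0 in nu10, nv10, nu20, nv20, nu31, nv31, nu32, nv32, nu03, nv03.
  assert (E1 : (u3-u0)*((v1-v0)-(v3-v0)) = (v1-v0)*(u1-u0)).
  { transitivity (- ((u0-u3)/(u1-u0)) * ((u1-u0)*(v1-v3))).
    - field. auto.
    - rewrite T1. field. auto. }
  assert (E2 : (u3-u0)*((v2-v0)-(v3-v0)) = (v2-v0)*(u2-u0)).
  { transitivity (- ((u0-u3)/(u2-u0)) * ((u2-u0)*(v2-v3))).
    - field. auto.
    - rewrite T2. field. auto. }
  assert (Hv' : v2 - v0 = (v1-v0) * (RtoC (Cmod ((v2 - v0) / (v1 - v0))) * (cos th, sin th))).
  { rewrite <- Hv. field. auto. }
  assert (Hu' : u2 - u0 = (u1-u0) * ((cos th, (- sin th)%R)*(cos th, (- sin th)%R))).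
  { rewrite <- cs_sq. transitivity ((u1-u0) * ((u2 - u0) / (u1 - u0))).
    - field. auto.
    - rewrite Hu. rewrite Cmod_div by auto. rewrite <- HA.
      rewrite Rdiv_diag. + f_equal. ring.
      + apply Rgt_not_eq, Cmod_pos; auto. }
  assert (HD : Cmod (u3 - u0) = Cmod (u1 - u0)).
  { apply (core u0 u1 u2 u3 v0 v1 v2 v3 th (Cmod ((v2 - v0) / (v1 - v0)))); auto.
    - lra.
    - apply Cmod_ge_0. }
  assert (pA : (0 < Cmod (u1 - u0))%R) by (apply Cmod_pos; auto).
  assert (M1 : Cmod (v1 - v3) = Cmod (v1 - v0)).
  { assert (F : (u3-u0)*(v1-v3) = (v1-v0)*(u1-u0)) by (rewrite <- E1; ring).
    apply (f_equal Cmod) in F. rewrite !Cmod_mult in F.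
    eapply cancel_mod; [exact pA | exact F | exact HD]. }
  assert (M2 : Cmod (v2 - v3) = Cmod (v2 - v0)).
  { assert (F : (u3-u0)*(v2-v3) = (v2-v0)*(u2-u0)) by (rewrite <- E2; ring).
    apply (f_equal Cmod) in F. rewrite !Cmod_mult in F.
    eapply cancel_mod; [apply Cmod_pos; exact nu20 | exact F | rewrite HD; exact HA]. }
  assert (G1 : (Cmod (u3 - u1) * Cmod (v3 - v1) = Cmod (u3 - u0) * Cmod (v3 - v0))%R).
  { assert (F : (v1-v0)*(u3-u1) = (u3-u0)*(v3-v0)).
    { transitivity ((v1-v0)*(u3-u0) - (v1-v0)*(u1-u0)). ring. rewrite <- E1. ring. }
    apply (f_equal Cmod) in F. rewrite !Cmod_mult in F. rewrite <- F.
    rewrite (Cmod_sym v3), M1. ring. }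
  assert (G2 : (Cmod (u3 - u2) * Cmod (v3 - v2) = Cmod (u3 - u0) * Cmod (v3 - v0))%R).
  { assert (F : (v2-v0)*(u3-u2) = (u3-u0)*(v3-v0)).
    { transitivity ((v2-v0)*(u3-u0) - (v2-v0)*(u2-u0)). ring. rewrite <- E2. ring. }
    apply (f_equal Cmod) in F. rewrite !Cmod_mult in F. rewrite <- F.
    rewrite (Cmod_sym v3), M2. ring. }
  split; [split; auto|split; [split|split]].
  - rewrite (Cmod_sym v3), (Cmod_sym v0). exact M1.
  - rewrite (Cmod_sym v3), (Cmod_sym v0). exact M2.
  - rewrite W1, W2, !Cmod_inv, !Cmod_mult, G1, G2; auto; apply Cmult_neq_0; auto.
  - rewrite (Cmod_sym w3 w0), W2, W0, !Cmod_inv, !Cmod_mult, G2, (Cmod_sym u0), (Cmod_sym v0); auto;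
      apply Cmult_neq_0; auto.
Qed.
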